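(* Let $G$ be a finite simple graph with at least one edge such that $\chi(G) > \frac{\Delta(G)}{2} + 1$. Then ${\rm vs}_{\chi}(G) = {\rm es}_{\chi}(G)$.
   Context: $\chi(G)$ is the chromatic number and $\Delta(G)$ the maximum degree of $G$. The chromatic vertex stability number ${\rm vs}_{\chi}(G)$ is the minimum number of vertices of $G$ whose deletion results in a graph $H$ with $\chi(H) = \chi(G)-1$. The chromatic edge stability number ${\rm es}_{\chi}(G)$ is the minimum number of edges of $G$ whose deletion results in a graph $H$ with $\chi(H) = \chi(G)-1$. *)

(* Defs.v *)
From mathcomp Require Import all_boot.
Set Implicit Arguments. Unset Strict Implicit. Unset Printing Implicit Defensive.

Section Graphs.
Variable T : finType.

Definition simple_graph (e : rel T) := irreflexive e /\ symmetric e.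

Definition colorable (r : rel T) (V : {set T}) (k : nat) : bool :=
  [exists f : {ffun T -> 'I_k}, [forall x in V, forall y in V, r x y ==> (f x != f y)]].

Definition chi (r : rel T) (V : {set T}) : nat :=
  \big[minn/#|V|]_(k < #|V|.+1 | colorable r V k) k.

Definition Delta (e : rel T) : nat := \max_(x : T) #|[set y | e x y]|.

Definition edges (e : rel T) : {set {set T}} :=
  [set [set p.1; p.2] | p in [set p : T * T | e p.1 p.2]].

Definition del_edges (e : rel T) (F : {set {set T}}) : rel T :=
  fun x y => e x y && ([set x; y] \notin F).

Definition vs_chi (e : rel T) : nat :=
  \big[minn/#|T|.+1]_(S : {set T} |
     chi e (~: S) == (chi e [set: T]).-1) #|S|.

Definition es_chi (e : rel T) : nat :=
  \big[minn/#|edges e|.+1]_(F : {set {set T}} |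
     (F \subset edges e) && (chi (del_edges e F) [set: T] == (chi e [set: T]).-1))
     #|F|.
End Graphs.

(* Main.v *)
Require Import Defs.
From mathcomp Require Import all_boot.
From mathcomp Require Import zify.
Set Implicit Arguments. Unset Strict Implicit. Unset Printing Implicit Defensive.

Section S.
Variable T : finType.
Implicit Types (r : rel T) (V : {set T}).

Lemma col_intro r V k (f : T -> 'I_k) :
  (forall x y, x \in V -> y \in V -> r x y -> f x != f y) -> colorable r V k.
Proof.
move=> H; apply/existsP; exists (finfun f); apply/forallP=> x; apply/implyP=> Hx.
apply/forallP=> y; apply/implyP=> Hy; apply/implyP=> rxy; rewrite !ffunE; exact: H.
Qed.

Lemma col_elim r V k : colorable r V k ->
  exists f : T -> 'I_k, forall x y, x \in V -> y \in V -> r x y -> f x != f y.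
Proof.
case/existsP=> f /forallP Hf; exists f => x y Hx Hy rxy.
by move: (Hf x); rewrite Hx /= => /forallP/(_ y); rewrite Hy rxy.
Qed.

Lemma col_widen r V k k' : k <= k' -> colorable r V k -> colorable r V k'.
Proof.
move=> kk /col_elim [f Hf]; apply: (@col_intro _ _ _ (fun x => widen_ord kk (f x))).
move=> x y Hx Hy rxy; apply: contra (Hf x y Hx Hy rxy) => /eqP E.
by apply/eqP; apply: val_inj; move/(congr1 val): E.
Qed.

Lemma col_add_vertex r V v k : irreflexive r ->
  colorable r (V :\ v) k -> colorable r V k.+1.
Proof.
move=> irr /col_elim [f Hf].
apply: (@col_intro _ _ _ (fun x => if x == v then ord_max else widen_ord (leqnSn k) (f x))).
move=> x y Hx Hy rxy.
case: (eqVneq x v) => [Ex|xv]; case: (eqVneq y v) => [Ey|yv].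
- by move: rxy; rewrite Ex Ey irr.
- by rewrite -val_eqE /= neq_ltn ltn_ord orbT.
- by rewrite -val_eqE /= neq_ltn ltn_ord.
- have := Hf x y; rewrite !inE xv yv Hx Hy => /(_ isT isT rxy).
  apply: contra => /eqP E; apply/eqP; apply: val_inj; move/(congr1 val): E.
  done.
Qed.

Lemma big_minn_le (I : finType) (P : pred I) (F : I -> nat) d i0 :
  P i0 -> \big[minn/d]_(i | P i) F i <= F i0.
Proof.
move=> Pi0; have : i0 \in index_enum I by rewrite mem_index_enum.
elim: (index_enum I) => [//|x s IH]; rewrite in_cons big_cons.
case: (eqVneq i0 x) => [<- _|_ /= /IH H]; first by rewrite Pi0 geq_minl.
by case: (P x) => //; apply: leq_trans (geq_minr _ _) H.
Qed.

Lemma big_minn_att (I : finType) (P : pred I) (F : I -> nat) d i0 :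
  P i0 -> F i0 <= d -> exists2 i, P i & \big[minn/d]_(i | P i) F i = F i.
Proof.
move=> Pi0 Fd.
have : (\big[minn/d]_(i | P i) F i == d) || [exists i, P i && (\big[minn/d]_(i | P i) F i == F i)].
  apply: (big_ind (fun x => (x == d) || [exists i, P i && (x == F i)])).
  - by rewrite eqxx.
  - by move=> a b Ha Hb; rewrite /minn; case: ifP.
  - by move=> i Pi; apply/orP; right; apply/existsP; exists i; rewrite Pi eqxx.
case/orP=> [/eqP E|/existsP [i /andP [Pi /eqP E]]]; last by exists i.
exists i0 => //; apply/eqP; rewrite eqn_leq big_minn_le //= E //.
Qed.

Lemma chi_le_card r V : chi r V <= #|V|.
Proof.
rewrite /chi; apply: (big_ind (fun x => x <= #|V|)) => //.
- by move=> a b Ha _; rewrite geq_min Ha.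
- by move=> i _; rewrite -ltnS; exact: ltn_ord.
Qed.

Lemma chi_le r V k : colorable r V k -> chi r V <= k.
Proof.
move=> Hc; case: (leqP k #|V|) => Hk.
  have Hk' : k < #|V|.+1 by [].
  rewrite /chi.
  exact: (big_minn_le (P := fun i : 'I_#|V|.+1 => colorable r V i) (fun i => nat_of_ord i) _ (i0 := Ordinal Hk')).
exact: leq_trans (chi_le_card r V) (ltnW Hk).
Qed.

Lemma chi_col r V : irreflexive r -> V != set0 -> colorable r V (chi r V).
Proof.
move=> irr /set0Pn [x0 Hx0]; rewrite /chi.
apply: (big_ind (colorable r V)) => //.
- apply: (@col_intro _ _ _ (enum_rank_in Hx0)) => x y Hx Hy rxy.
  apply/negP => /eqP E; have xy := enum_rank_in_inj Hx Hy E.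
  by move: rxy; rewrite xy irr.
- by move=> a b Ha Hb; rewrite /minn; case: ifP.
Qed.

Lemma chi_leP r V k : irreflexive r -> V != set0 -> (chi r V <= k) = colorable r V k.
Proof.
move=> irr V0; apply/idP/idP; last exact: chi_le.
by move=> H; apply: col_widen H (chi_col irr V0).
Qed.


Lemma col_ext r r' V k : r =2 r' -> colorable r V k = colorable r' V k.
Proof.
move=> E; apply/idP/idP => /col_elim [f Hf]; apply: (@col_intro _ _ _ f) => x y Hx Hy rxy;
  apply: Hf => //; by rewrite ?E // -E.
Qed.

Lemma chi_ext r r' V : r =2 r' -> chi r V = chi r' V.
Proof. by move=> E; rewrite /chi; apply: eq_bigl => i; rewrite (col_ext _ _ E). Qed.

Lemma chi_vertex_step r W x : irreflexive r -> chi r W <= (chi r (W :\ x)).+1.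
Proof.
move=> irr; case: (eqVneq (W :\ x) set0) => [W0|Wn0].
  apply: (@leq_trans 1); last by [].
  apply: chi_le; apply: (@col_intro _ _ _ (fun _ => ord0)) => a b Ha Hb rab.
  have Ea : a = x.
    apply/eqP; apply: contraT => ne; suff : a \in (set0 : {set T}) by rewrite inE.
    by rewrite -W0 !inE ne Ha.
  have Eb : b = x.
    apply/eqP; apply: contraT => ne; suff : b \in (set0 : {set T}) by rewrite inE.
    by rewrite -W0 !inE ne Hb.
  by move: rab; rewrite Ea Eb irr.
exact: chi_le (col_add_vertex irr (chi_col irr Wn0)).
Qed.

Lemma col_add_edge (e : rel T) (F : {set {set T}}) (g : {set T}) (a : T) V k : irreflexive e ->
  a \in g -> colorable (del_edges e F) V k -> colorable (del_edges e (F :\ g)) V k.+1.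
Proof.
move=> irr ag /col_elim [f Hf].
apply: (@col_intro _ _ _ (fun x => if x == a then ord_max else widen_ord (leqnSn k) (f x))).
move=> x y Hx Hy /andP [exy nF].
case: (eqVneq x a) => [Ex|xa]; case: (eqVneq y a) => [Ey|ya].
- by move: exy; rewrite Ex Ey irr.
- by rewrite -val_eqE /= neq_ltn ltn_ord orbT.
- by rewrite -val_eqE /= neq_ltn ltn_ord.
- have ng : [set x; y] != g.
    apply: contraTneq ag => <-; by rewrite !inE negb_or eq_sym xa eq_sym ya.
  have nF' : [set x; y] \notin F by move: nF; rewrite !inE ng.
  have := Hf x y Hx Hy; rewrite /del_edges exy nF' => /(_ isT).
  apply: contra => /eqP E; apply/eqP; apply: val_inj; move/(congr1 val): E.
  done.
Qed.

End S.

Lemma ivt (X : finType) (phi : {set X} -> nat) (D : {set X}) m :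
  (forall (A : {set X}) x, A \subset D -> x \in A -> phi (A :\ x) <= (phi A).+1) ->
  m < phi set0 -> forall A : {set X}, A \subset D -> phi A <= m ->
  exists2 B : {set X}, B \subset A & phi B = m.
Proof.
move=> step m0 A.
elim: {A}_.+1 {-2}A (ltnSn #|A|) => // n IH A HA AD HphiA.
case: (eqVneq (phi A) m) => [E|ne]; first by exists A.
have lt : phi A < m by rewrite ltn_neqAle ne HphiA.
case: (set_0Vmem A) => [A0|[x xA]].
  by move: HphiA; rewrite A0 leqNgt m0.
have HA' : #|A :\ x| < n by move: HA; rewrite (cardsD1 x A) xA.
have AD' : A :\ x \subset D by apply: subset_trans (subD1set A x) AD.
have [B BA EB] := IH (A :\ x) HA' AD' (leq_trans (step A x AD xA) lt).
by exists B => //; apply: subset_trans BA (subD1set A x).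
Qed.

Section G.
Variable T : finType.
Variable e : rel T.
Hypothesis irr : irreflexive e.
Hypothesis sym : symmetric e.

Lemma pigeon (N : {set T}) k (c : T -> 'I_k) : #|N| < k.*2 ->
  exists i : 'I_k, #|[set y in N | c y == i]| <= 1.
Proof.
move=> HN; apply/existsP; apply: contraLR HN; rewrite negb_exists => /forallP H.
rewrite -leqNgt.
have -> : #|N| = \sum_(i < k) #|[set y in N | c y == i]|.
  rewrite -sum1_card (partition_big c predT) //=; apply: eq_bigr => i _.
  by rewrite -sum1_card; apply: eq_bigl => y; rewrite !inE.
have -> : k.*2 = \sum_(i < k) 2 by rewrite sum_nat_const card_ord muln2.
by apply: leq_sum => i _; move: (H i); rewrite -ltnNge.
Qed.

Lemma nbr_bound (v : T) (N : {set T}) : N \subset [set y | e v y] -> #|N| <= Delta e.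
Proof.
move=> sub; apply: leq_trans (subset_leq_card sub) _.
rewrite /Delta; exact: (@leq_bigmax _ (fun x => #|[set y | e x y]|) v).
Qed.

Lemma greedy k : Delta e < k.*2 -> forall n (S : {set T}) (F0 : {set {set T}}),
  #|S| = n -> F0 \subset edges e -> colorable (del_edges e F0) (~: S) k ->
  exists F : {set {set T}}, [/\ F \subset edges e, #|F| <= #|F0| + #|S| &
             colorable (del_edges e F) [set: T] k].
Proof.
move=> HD; elim=> [|n IH] S F0 HS F0e Hc.
  exists F0; split => //; first exact: leq_addr.
  by rewrite -setC0 -(cards0_eq HS).
have [v vS] : exists v, v \in S by apply/card_gt0P; rewrite HS.
have [c Hc'] := col_elim Hc.
pose N := [set y in ~: S | del_edges e F0 v y].
have NB : #|N| <= Delta e.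
  apply: (@nbr_bound v); apply/subsetP => y; rewrite !inE => /andP [_ /andP [-> _]].
  done.
have [i Hi] := pigeon c (leq_ltn_trans NB HD).
pose Ni := [set y in N | c y == i].
pose F1 := F0 :|: [set [set v; y] | y in Ni].
have F1e : F1 \subset edges e.
  rewrite subUset F0e /=; apply/subsetP => g /imsetP [y yNi ->].
  apply/imsetP; exists (v, y) => //.
  by move: yNi; rewrite !inE => /andP [/andP [_ /andP [-> _]] _].
have cF1 : #|F1| <= #|F0| + 1.
  rewrite cardsU; apply: leq_trans (leq_subr _ _) _.
  by rewrite leq_add2l; apply: leq_trans (leq_imset_card _ _) Hi.
have Hc1 : colorable (del_edges e F1) (~: (S :\ v)) k.
  apply: (@col_intro _ _ _ _ (fun x => if x == v then i else c x)).
  have r0 : forall x y, del_edges e F1 x y -> del_edges e F0 x y.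
    move=> x y /andP [exy nF]; rewrite /del_edges exy /=; apply: contra nF => H.
    by rewrite inE H.
  have inS : forall x, x \in ~: (S :\ v) -> x != v -> x \in ~: S.
    by move=> x; rewrite !inE negb_and negbK => /orP [-> //| ->].
  have key : forall y, y \in ~: S -> del_edges e F1 v y -> c y != i.
    move=> y yS r1; have r0v := r0 _ _ r1; apply: contraTneq r1 => E.
    rewrite /del_edges negb_and; apply/orP; right; rewrite negbK.
    rewrite inE; apply/orP; right; apply/imsetP; exists y => //.
    by rewrite !inE E eqxx andbT -in_setC yS r0v.
  move=> x y Hx Hy rxy.
  case: (eqVneq x v) => [Ex|xv]; case: (eqVneq y v) => [Ey|yv].
  - by move: rxy; rewrite Ex Ey /del_edges irr.
  - by rewrite eq_sym; apply: key; [exact: inS | rewrite -Ex].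
  - apply: key; first exact: inS.
    by move: rxy; rewrite -Ey /del_edges sym setUC.
  - by apply: Hc'; [exact: inS | exact: inS | exact: r0].
have HS' : #|S :\ v| = n by move: HS; rewrite (cardsD1 v S) vS add1n => [[]].
have [F [Fe cF colF]] := IH (S :\ v) F1 HS' F1e Hc1.
exists F; split => //; apply: leq_trans cF _.
by move: cF1 (cardsD1 v S); rewrite vS /=; lia.
Qed.

Lemma edges_to_vertices (x0 : T) k (F : {set {set T}}) :
  colorable (del_edges e F) [set: T] k ->
  exists S : {set T}, #|S| <= #|F| /\ colorable e (~: S) k.
Proof.
move=> /col_elim [f Hf].
pose pt (g : {set T}) := odflt x0 [pick x in g].
exists (pt @: F); split; first exact: leq_imset_card.
apply: (@col_intro _ _ _ _ f) => x y Hx Hy exy.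
apply: Hf; rewrite ?inE //; rewrite /del_edges exy /=.
apply/negP => H.
have Hp : pt [set x; y] \in pt @: F by apply: imset_f.
have : pt [set x; y] \in [set x; y].
  rewrite /pt; case: pickP => [z zin|none] //=.
  by move: (none x); rewrite !inE eqxx.
rewrite !inE => /orP [/eqP E|/eqP E].
  by move: Hx; rewrite inE -E Hp.
by move: Hy; rewrite inE -E Hp.
Qed.

End G.

Theorem theorem4 (T : finType) (e : rel T) :
  simple_graph e ->
  (exists x y, e x y) ->
  (* chi(G) > Delta(G)/2 + 1, i.e. 2 chi(G) > Delta(G) + 2 *)
  Delta e + 2 < 2 * chi e [set: T] ->
  vs_chi e = es_chi e.
Proof.
move=> [irr sym] [x0 [y0 exy]] HD.
have irrF : forall F, irreflexive (del_edges e F).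
  by move=> F x; rewrite /del_edges irr.
have T0 : [set: T] != set0 by apply/set0Pn; exists x0.
set chiG := chi e [set: T] in HD *.
have chi2 : 1 < chiG.
  rewrite ltnNge /chiG chi_leP //; apply/negP => /col_elim [f Hf].
  by move: (Hf x0 y0 (in_setT _) (in_setT _) exy); rewrite !ord1.
set k := chiG.-1.
have Dk : Delta e < k.*2 by rewrite /k -muln2; lia.
have k1 : 0 < k by rewrite /k; lia.
have del0 : del_edges e set0 =2 e by move=> x y; rewrite /del_edges inE andbT.
have V1 : forall S : {set T}, chi e (~: S) <= k ->
    exists2 S' : {set T}, S' \subset S & chi e (~: S') = k.
  move=> S HS.
  apply: (@ivt _ (fun S => chi e (~: S)) [set: T]) => //; last first.
    by rewrite setC0 /k; lia.
  move=> A x _ xA.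
  have -> : ~: A = ~: (A :\ x) :\ x.
    by apply/setP => y; rewrite !inE; case: (eqVneq y x) => [->|yx]; rewrite ?xA ?eqxx //=.
  exact: chi_vertex_step.
have E1 : forall F : {set {set T}}, F \subset edges e ->
    chi (del_edges e F) [set: T] <= k ->
    exists2 F' : {set {set T}}, F' \subset F & chi (del_edges e F') [set: T] = k.
  move=> F Fe HF.
  apply: (@ivt _ (fun F => chi (del_edges e F) [set: T]) (edges e)) => //; last first.
    by rewrite (chi_ext _ del0) /k; lia.
  move=> A g Ae gA.
  have /imsetP [p _ Ep] : g \in edges e by apply: (subsetP Ae).
  have ag : p.1 \in g by rewrite Ep !inE eqxx.
  apply: chi_le; exact: (col_add_edge irr ag (chi_col (irrF A) T0)).

have [S1 _ PS1] : exists2 S' : {set T}, S' \subset [set: T] & chi e (~: S') = k.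
  apply: V1; rewrite setCT; apply: leq_trans (chi_le_card _ _) _; by rewrite cards0.
have [Sm PSm Em] : exists2 S : {set T}, chi e (~: S) == k & vs_chi e = #|S|.
  rewrite /vs_chi; apply: (@big_minn_att _ (fun S : {set T} => chi e (~: S) == k) (fun S => #|S|) _ S1).
    by rewrite PS1.
  by rewrite ltnW // ltnS max_card.
have Sm0 : ~: Sm != set0.
  apply: contraTneq PSm => ->.
  by move: (chi_le_card e set0); rewrite cards0 leqn0 => /eqP ->; rewrite eq_sym -lt0n.
have cSm : colorable e (~: Sm) k by rewrite -chi_leP // (eqP PSm).
have cSm0 : colorable (del_edges e set0) (~: Sm) k by rewrite (col_ext _ _ del0).
have [F [Fe cF colF]] := greedy irr sym Dk (erefl #|Sm|) (sub0set _) cSm0.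
have [F' F'F PF'] := E1 F Fe (chi_le colF).
have F'e : F' \subset edges e by apply: subset_trans F'F Fe.
have le1 : es_chi e <= vs_chi e.
  apply: leq_trans (_ : #|F'| <= _); last first.
    by rewrite Em; apply: leq_trans (subset_leq_card F'F) _; rewrite cards0 in cF.
  rewrite /es_chi.
  apply: (@big_minn_le _ (fun F : {set {set T}} => (F \subset edges e) && (chi (del_edges e F) [set: T] == k)) (fun F => #|F|)).
  by rewrite F'e PF' eqxx.
have [Fm /andP [Fme PFm] Emf] : exists2 F : {set {set T}}, (F \subset edges e) && (chi (del_edges e F) [set: T] == k) & es_chi e = #|F|.
  rewrite /es_chi; apply: (@big_minn_att _ (fun F : {set {set T}} => (F \subset edges e) && (chi (del_edges e F) [set: T] == k)) (fun F => #|F|) _ F').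
    by rewrite F'e PF' eqxx.
  by rewrite ltnW // ltnS subset_leq_card.
have cFm : colorable (del_edges e Fm) [set: T] k by rewrite -chi_leP // (eqP PFm).
have [S [cS colS]] := edges_to_vertices x0 cFm.
have [S' S'S PS'] := V1 S (chi_le colS).
have le2 : vs_chi e <= es_chi e.
  apply: leq_trans (_ : #|S'| <= _).
    rewrite /vs_chi.
    apply: (@big_minn_le _ (fun S : {set T} => chi e (~: S) == k) (fun S => #|S|)).
    by rewrite PS'.
  by rewrite Emf; apply: leq_trans (subset_leq_card S'S) cS.
by apply/eqP; rewrite eqn_leq le1 le2.
Qed.
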